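(* Let $d\ge1$, $c\in C(d,2,p)$ and $S=\mathbf k[x,y]$. With notation $\mathcal Z(c,d)=\{0=t_0<\dots<t_\ell\}$, $\delta_{t_r}$, and $\phi_\ell=p^{t_\ell}-\sum_{k=0}^{\ell-1}\mathrm{Cont}(\delta_{t_k})p^{t_k}$, we have $$\operatorname{reg}(S/I_{c,d})=\max\{e\ge0:(S/I_{c,d})_e\ne0\}=d+\phi_\ell-2.$$
   Context: $\mathbf k$ algebraically closed of characteristic $p>0$. Base-$p$ expansion $d=\sum_{j=0}^Md_jp^j$, $d_M\ne0$. The carry pattern $(c_1,\dots,c_M)$ of $x^ay^b$ ($a+b=d$) is determined by $\sum_{j<\ell}(a_j+b_j)p^j=c_\ell p^\ell+\sum_{j<\ell}d_jp^j$, $1\le\ell\le M$ ($c_i=0$ for $i<1$, $i>M$). $C(d,2,p)$ is the set of such patterns, ordered componentwise; $I_{c,d}$ is generated by the degree-$d$ monomials with carry pattern $\le c$. $\mathcal Z(c,d)=\{0\le k\le M:c_k=0,\ (c_{k-1},d_{k-1})\ne(0,p-1)\}$ with the convention $0\in\mathcal Z(c,d)$; $t_{\ell+1}=M+1$; $\delta_{t_r}=(d_{t_r},\dots,d_{t_{r+1}-1})$ with $\mathrm{Cont}(\delta_{t_r})=\sum_{k=t_r}^{t_{r+1}-1}d_kp^{k-t_r}$. $\operatorname{reg}$ is Castelnuovo--Mumford regularity. *)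

(* Defs.v *)
From HB Require Import structures.
From mathcomp Require Import all_boot all_order all_algebra.
Set Implicit Arguments. Unset Strict Implicit. Unset Printing Implicit Defensive.
Import Order.TTheory GRing.Theory Num.Theory.

Definition digit (p d j : nat) : nat := (d %/ p ^ j) %% p.

Definition topM (p d : nat) : nat := trunc_log p d.

(* c_l for x^a y^b : sum_{j<l}(a_j+b_j)p^j = (a %% p^l) + (b %% p^l)
   = c_l p^l + (d %% p^l)   (when a + b = d) *)
Definition carry (p a b l : nat) : nat := (a %% p ^ l + b %% p ^ l) %/ p ^ l.

Definition carry_pat (p d a : nat) (l : nat) : nat :=
  if (1 <= l <= topM p d) then carry p a (d - a) l else 0.

Definition inC (p d : nat) (c : nat -> nat) : Prop :=
  exists2 a, a <= d & forall l, c l = carry_pat p d a l.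

(* x^a y^(d-a) is a generator of I_{c,d}: carry pattern <= c componentwise *)
Definition gen (p d : nat) (c : nat -> nat) (a : nat) : bool :=
  (a <= d) && all (fun l => carry_pat p d a l <= c l) (iota 1 (topM p d)).

(* monomial x^u y^v lies in the monomial ideal I_{c,d} iff it is divisible
   by one of its monomial generators *)
Definition inI (p d : nat) (c : nat -> nat) (u v : nat) : bool :=
  has (fun a => [&& gen p d c a, a <= u & d - a <= v]) (iota 0 d.+1).

(* dimension (0 or 1) of the multigraded piece (S/I)_{(a-da, b-db)} *)
Definition nS (p d : nat) (c : nat -> nat) (a b da db : nat) : nat :=
  [&& da <= a, db <= b & ~~ inI p d c (a - da) (b - db)].

(* ---------- Koszul complex K(x,y; S/I) in multidegree (a,b) ----------
   0 -> (S/I)_{(a-1,b-1)} -> (S/I)_{(a-1,b)} (+) (S/I)_{(a,b-1)} -> (S/I)_{(a,b)} -> 0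
   d2 u = (-y u, x u),  d1 (f,g) = x f + y g  (row-vector convention).
   Multiplication by a variable between monomial pieces of dim <= 1 is
   the 1x1 identity when both pieces are nonzero. *)
Section Koszul.
Variables (k : fieldType) (p d : nat) (c : nat -> nat) (a b : nat).
Definition kd0 := nS p d c a b 0 0.
Definition kd1x := nS p d c a b 1 0.
Definition kd1y := nS p d c a b 0 1.
Definition kd2 := nS p d c a b 1 1.
Definition kdiff1 : 'M[k]_(kd1x + kd1y, kd0) :=
  col_mx (const_mx 1%R) (const_mx 1%R).
Definition kdiff2 : 'M[k]_(kd2, kd1x + kd1y) :=
  row_mx (const_mx (-1)%R) (const_mx 1%R).
(* multigraded Betti number beta_{i,(a,b)} = dim_k Tor_i^S(S/I,k)_{(a,b)}
   = dim_k H_i(K(x,y; S/I))_{(a,b)} *)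
Definition mbetti (i : nat) : nat :=
  match i with
  | 0 => kd0 - \rank kdiff1
  | 1 => (kd1x + kd1y) - \rank kdiff1 - \rank kdiff2
  | 2 => kd2 - \rank kdiff2
  | _ => 0
  end.
End Koszul.

Definition betti (k : fieldType) (p d : nat) (c : nat -> nat) (i j : nat) : nat :=
  \sum_(a < j.+1) mbetti k p d c a (j - a) i.

Definition hilb (p d : nat) (c : nat -> nat) (e : nat) : nat :=
  \sum_(a < e.+1) nS p d c a (e - a) 0 0.

Definition reg_is (k : fieldType) (p d : nat) (c : nat -> nat) (R : int) : Prop :=
  (forall i j, betti k p d c i j <> 0 -> ((j%:Z%R - i%:Z%R)%R <= R)%R) /\
  (exists i j, betti k p d c i j <> 0 /\ (j%:Z%R - i%:Z%R)%R = R).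

Definition topdeg_is (p d : nat) (c : nat -> nat) (R : int) : Prop :=
  (forall e, hilb p d c e <> 0 -> (e%:Z%R <= R)%R) /\
  (exists e, hilb p d c e <> 0 /\ e%:Z%R = R).

Definition inZ (p d : nat) (c : nat -> nat) (k : nat) : bool :=
  (k == 0) ||
  [&& k <= topM p d, c k == 0 &
      ~~ ((c k.-1 == 0) && (digit p d k.-1 == p.-1))].

Definition tseq (p d : nat) (c : nat -> nat) : seq nat :=
  [seq k <- iota 0 (topM p d).+1 | inZ p d c k].

Definition ell (p d : nat) (c : nat -> nat) : nat := (size (tseq p d c)).-1.

(* t_r, with t_{ell+1} = M+1 *)
Definition tt (p d : nat) (c : nat -> nat) (r : nat) : nat :=
  nth (topM p d).+1 (tseq p d c) r.

Definition Cont (p d : nat) (c : nat -> nat) (r : nat) : nat :=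
  \sum_(tt p d c r <= j < tt p d c r.+1) digit p d j * p ^ (j - tt p d c r).

Definition phi (p d : nat) (c : nat -> nat) : int :=
  ((p ^ tt p d c (ell p d c))%:Z%R -
   (\sum_(r < ell p d c) Cont p d c r * p ^ tt p d c r)%:Z%R)%R.

(* Main.v *)
Require Import Defs.
From HB Require Import structures.
From mathcomp Require Import all_boot all_order all_algebra.
From mathcomp Require Import zify.
Import Order.TTheory GRing.Theory Num.Theory.

Lemma modS (p x n : nat) : 0 < p ->
  x %% p ^ n.+1 = x %% p ^ n + digit p x n * p ^ n.
Proof.
move=> p0; rewrite /digit.
have Pp : 0 < p ^ n by rewrite expn_gt0 p0.
set P := p ^ n. set q := x %/ P. set r := x %% P.
have hx : x = q * P + r by rewrite /q /r -divn_eq.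
have hq : q = q %/ p * p + q %% p by rewrite -divn_eq.
have hr : r < P by rewrite /r ltn_pmod.
have ht : q %% p < p by rewrite ltn_pmod.
have hlt : r + q %% p * P < P * p.
  have h1 : q %% p <= p - 1 by move: ht; clear; lia.
  have : q %% p * P <= (p - 1) * P by rewrite leq_mul.
  nia.
rewrite expnSr -/P.
have -> : x = (q %/ p) * (P * p) + (r + q %% p * P).
  rewrite {1}hx {1}hq mulnDl -mulnA [p * P]mulnC; lia.
by rewrite modnMDl modn_small.
Qed.

Lemma modsum (p x m n : nat) : 0 < p -> m <= n ->
  x %% p ^ n = x %% p ^ m + \sum_(m <= j < n) digit p x j * p ^ j.
Proof.
move=> p0 /subnK <-; elim: (n - m) => [|k IH]; first by rewrite add0n big_geq ?addn0.
rewrite addSn big_nat_recr ?leq_addl //= modS // IH addnA.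
done.
Qed.

Lemma carry_facts (p a d l : nat) : 0 < p -> a <= d ->
  carry p a (d - a) l <= 1 /\
  (carry p a (d - a) l == 0) = (a %% p ^ l <= d %% p ^ l).
Proof.
move=> p0 ad; rewrite /carry.
have P0 : 0 < p ^ l by rewrite expn_gt0 p0.
set P := p ^ l.
have ha : a %% P < P by rewrite ltn_pmod.
have hb : (d - a) %% P < P by rewrite ltn_pmod.
have hD : (a %% P + (d - a) %% P) %% P = d %% P.
  by rewrite modnDm subnKC.
have he := divn_eq (a %% P + (d - a) %% P) P.
rewrite hD in he.
have hq : (a %% P + (d - a) %% P) %/ P < 2 by rewrite ltn_divLR //; lia.
move: he hq; set q := _ %/ P => he hq.
case: q he hq => [|[|q]] he hq //; split => //.
- by move: he; rewrite mul0n add0n => <-; rewrite leq_addr.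
- rewrite mul1n in he; apply/esym/negbTE; rewrite -ltnNge. lia.
Qed.

Fact ar_lt {a b P r x d : nat} : x = a * P + r -> d = b * P + r -> x < d -> a < b.
Proof. by move=> -> ->; rewrite ltn_add2r ltn_mul2r => /andP[]. Qed.
Fact ar_hy {x A r P : nat} : x = A + r -> r < P -> x + (P - r) = P + A.
Proof. lia. Qed.
Fact ar_yd {x d A B r P : nat} : x = A + r -> d = B + r -> P + A <= B -> r < P -> x + (P - r) <= d.
Proof. lia. Qed.
Fact ar_xy {x r P : nat} : r < P -> x < x + (P - r).
Proof. lia. Qed.
Fact ar1 {A B C : nat} : A < C -> C <= B.+1 -> A <= B.
Proof. lia. Qed.
Fact ar_last {X Y A B r P Q : nat} : X = A + r -> Y = B + r -> P + A <= B -> Y < Q -> r < P ->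
  X + (P - r) <= Y /\ X + (P - r) < Q.
Proof. lia. Qed.
Fact ar2 {A B C : nat} : A <= B + 1 -> B < C -> A <= C.
Proof. lia. Qed.

Fact ar_hole {u v x y d g : nat} : u < y -> v < d - x -> y <= x + g -> x < y -> x < d ->
  u + v <= d + g - 2.
Proof. lia. Qed.


Lemma sum_nz n (F : nat -> nat) : \sum_(a < n) F a <> 0 -> exists2 a, a < n & F a <> 0.
Proof.
move=> h; case: (boolP [exists a : 'I_n, F a != 0]) => [/existsP[a ha]|].
  by exists a => //; apply/eqP.
rewrite negb_exists => /forallP H; exfalso; apply: h; apply: big1 => a _.
by apply/eqP; move: (H a); rewrite negbK.
Qed.

Lemma sum_ge n (F : nat -> nat) a : a < n -> F a <= \sum_(i < n) F i.
Proof. by move=> h; rewrite (bigD1 (Ordinal h)) //= leq_addr. Qed.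

Section Main.
Variables (p d : nat) (c : nat -> nat).
Hypothesis p1 : 1 < p.
Hypothesis d1 : 0 < d.
Hypothesis hc : inC p d c.

Local Notation M := (topM p d).
Local Notation D n := (d %% p ^ n).
Local Notation ts := (tseq p d c).

Lemma p0 : 0 < p. Proof. exact: ltnW. Qed.
Lemma c0 : c 0 = 0. Proof. by case: hc => a _ ->. Qed.
Lemma pM : p ^ M <= d. Proof. exact: trunc_logP. Qed.

Lemma mem_ts s : (s \in ts) = (s <= M) && inZ p d c s.
Proof. by rewrite /tseq mem_filter mem_iota add0n ltnS andbC. Qed.

Definition Gz a := (a <= d) /\ forall s, s \in ts -> a %% p ^ s <= D s.

Lemma Gz_carry a : Gz a -> forall l, l <= M -> c l = 0 -> a %% p ^ l <= D l.
Proof.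
move=> [ad hz]; elim=> [|l IH] lM cl; first by rewrite expn0 !modn1.
case hZ: (inZ p d c l.+1); first by apply: hz; rewrite mem_ts lM hZ.
move: hZ; rewrite /inZ /= cl lM eqxx /= => /negbFE /andP[/eqP cl' /eqP dl].
have := IH (ltnW lM) cl'.
rewrite !modS ?p0 // dl.
have : digit p a l <= p.-1 by rewrite /digit -ltnS prednK ?ltn_pmod ?p0.
move=> h1 h2; have := leq_mul h1 (leqnn (p ^ l)). lia.
Qed.

Lemma gen_Gz a : gen p d c a <-> Gz a.
Proof.
split.
- case/andP=> ad /allP hall; split=> // s; rewrite mem_ts => /andP[sM].
  rewrite /inZ; case/orP=> [/eqP->|/and3P[_ /eqP cs _]]; first by rewrite !expn0 !modn1.
  case: (posnP s) => [->|s1]; first by rewrite !expn0 !modn1.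
  have := hall s; rewrite mem_iota s1 add1n ltnS sM /carry_pat s1 sM cs /= => /(_ isT).
  rewrite leqn0; by have [_ ->] := carry_facts p a d s p0 ad.
- move=> hG; have [ad _] := hG; apply/andP; split=> //; apply/allP=> l.
  rewrite mem_iota add1n ltnS => /andP[l1 lM].
  rewrite /carry_pat l1 lM /=.
  have [h1 h2] := carry_facts p a d l p0 ad.
  case cl: (c l) => [|n]; last by apply: leq_trans h1 _.
  by rewrite leqn0 h2; apply: Gz_carry.
Qed.

Local Notation tt' := (tt p d c).
Local Notation ellv := (ell p d c).
Local Notation T := (tt p d c (ell p d c)).

Lemma ts_size : size ts = ellv.+1.
Proof. by rewrite /ell /tseq /=. Qed.

Lemma tt0 : tt' 0 = 0.
Proof. by rewrite /tt /tseq. Qed.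

Lemma ts_sorted : sorted leq ts.
Proof. apply: sorted_filter; [exact: leq_trans | exact: iota_sorted]. Qed.

Lemma tt_mono r r' : r <= r' -> r' <= ellv -> tt' r <= tt' r'.
Proof.
move=> rr' r'l; rewrite /tt.
have := sorted_leq_nth leq_trans leqnn (topM p d).+1 ts_sorted.
move=> /(_ r r'); apply; rewrite ?unfold_in /= ?ts_size ?ltnS //; exact: leq_trans r'l.
Qed.

Lemma tt_in r : r <= ellv -> tt' r \in ts.
Proof. by move=> rl; rewrite /tt mem_nth // ts_size. Qed.

Lemma ts_leT s : s \in ts -> s <= T.
Proof.
move=> sin; rewrite -(nth_index (topM p d).+1 sin) -/(tt' _); apply: tt_mono => //.
by rewrite -ltnS -ts_size index_mem.
Qed.

Lemma T_M : T <= M.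
Proof. by have := tt_in ellv (leqnn ellv); rewrite mem_ts => /andP[]. Qed.

Lemma DT_lt n : D n < p ^ n.
Proof. by rewrite ltn_pmod // expn_gt0 p0. Qed.

Lemma Cont_eq r : r < ellv ->
  D (tt' r.+1) = D (tt' r) + Cont p d c r * p ^ (tt' r).
Proof.
move=> rl; rewrite (modsum p d _ _ p0 (tt_mono r r.+1 (leqnSn r) rl)); congr (_ + _).
rewrite /Cont big_distrl /=; apply: eq_big_nat => j /andP[h _].
by rewrite -mulnA -expnD subnK.
Qed.

Lemma sum_Cont n : n <= ellv ->
  \sum_(r < n) Cont p d c r * p ^ (tt' r) = D (tt' n).
Proof.
elim: n => [|n IH] nl; first by rewrite big_ord0 tt0 expn0 modn1.
by rewrite big_ord_recr /= IH ?(ltnW nl) // Cont_eq.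
Qed.

Lemma phiE : phi p d c = Posz (p ^ T - D T).
Proof. by rewrite /phi sum_Cont // subzn // ltnW // DT_lt. Qed.

Lemma f_mono m n : m <= n -> p ^ m - D m <= p ^ n - D n.
Proof.
move=> /subnK <-; elim: (n - m) => [|k IH] //.
rewrite addSn modS ?p0 // expnS.
have hD := DT_lt (k + m).
have hdig : digit p d (k + m) <= p - 1 by rewrite /digit; have := ltn_pmod (d %/ p ^ (k + m)) p0; lia.
have := leq_mul hdig (leqnn (p ^ (k + m))).
rewrite mulnBl mul1n. nia.
Qed.

Lemma Gz0 : Gz 0.
Proof. by split=> // s _; rewrite mod0n. Qed.

Lemma Gzd : Gz d.
Proof. by split. Qed.

Lemma gap x : Gz x -> x < d -> exists y, [/\ Gz y, x < y & y <= x + (p ^ T - D T)].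
Proof.
move=> [xd hx] xltd.
set V := fun s => [&& s \in ts, x %% p ^ s == D s & (D s).+1 < p ^ s].
have VM s : V s -> s <= M by case/and3P; rewrite mem_ts => /andP[].
have gpos : 0 < p ^ T - D T by rewrite subn_gt0 DT_lt.
case: (boolP (has V (iota 0 M.+1))) => [/hasP exV | noV].
- have exV' : exists s, V s by case: exV => s _ Vs; exists s.
  case: (ex_maxnP exV' VM) => S VS Smax.
  have /and3P[Sin /eqP xS DS] := VS.
  have P0 : 0 < p ^ S by rewrite expn_gt0 p0.
  set P := p ^ S in xS DS P0.
  have hxe := divn_eq x P; rewrite xS in hxe.
  have hde := divn_eq d P.
  have hq : x %/ P < d %/ P := ar_lt hxe hde xltd.
  have hq2 := leq_mul hq (leqnn P); rewrite mulSn in hq2.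
  exists (x + (P - D S)); split; [| exact: ar_xy (ltnW DS) | by rewrite leq_add2l f_mono // ts_leT].
  split; first exact: ar_yd hxe hde hq2 (ltnW DS).
  move=> s sin; case: (leqP s S) => sS.
  + have hy : x + (P - D S) = (x %/ P).+1 * P by rewrite mulSn; apply: ar_hy hxe (ltnW DS).
    have : p ^ s %| (x %/ P).+1 * P by apply: dvdn_mull; apply: dvdn_exp2l.
    by rewrite /dvdn hy => /eqP ->.
  + have Ps0 : 0 < p ^ s by rewrite expn_gt0 p0.
    have hxs := hx s sin.
    case: (ltngtP (x %% p ^ s) (D s)) => [xlt|xgt|xeq]; first last.
    - have nV : ~~ V s by apply/negP => /Smax; rewrite leqNgt sS.
      move: nV; rewrite /V sin xeq eqxx /= -leqNgt => h.
      exact: ar1 (ltn_pmod _ Ps0) h.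
    - by rewrite ltnNge hxs in xgt.
    have PPs : P %| p ^ s by apply: dvdn_exp2l; apply: ltnW.
    have e1 : (x %% p ^ s) %% P = D S by rewrite modn_dvdm // xS.
    have e2 : (D s) %% P = D S by rewrite modn_dvdm.
    have ha := divn_eq (x %% p ^ s) P; rewrite e1 in ha.
    have hb := divn_eq (D s) P; rewrite e2 in hb.
    have hab : (x %% p ^ s) %/ P < (D s) %/ P.
      exact: ar_lt ha hb xlt.
    have hab2 := leq_mul hab (leqnn P); rewrite mulSn in hab2.
    have hDs := DT_lt s.
    have [h1 h2] := ar_last ha hb hab2 hDs (ltnW DS).
    by rewrite -modnDml modn_small.
- exists x.+1; split; [|done|by rewrite -addn1 leq_add2l].
  split=> // s sin.
  have Vs : ~~ V s by apply: (contra _ noV) => Vs; apply/hasP; exists s => //;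
    rewrite mem_iota add0n ltnS VM.
  have := hx s sin; rewrite leq_eqVlt => /orP[/eqP xe|xlt].
  + move: Vs; rewrite /V sin xe eqxx /= -leqNgt => h.
    have Ps0 : 0 < p ^ s by rewrite expn_gt0 p0.
    exact: ar1 (ltn_pmod _ Ps0) h.
  + have : x.+1 %% p ^ s <= x %% p ^ s + 1 by rewrite -addn1 -modnDml leq_mod.
    move=> h; exact: ar2 h xlt.
Qed.

Lemma inI_intro a u v : Gz a -> a <= u -> d - a <= v -> inI p d c u v.
Proof.
move=> ga au av; apply/hasP; exists a.
  by case: ga => ad _; rewrite mem_iota add0n ltnS.
by apply/and3P; split => //; apply/(gen_Gz a).
Qed.

Lemma notinI u v : ~~ inI p d c u v -> forall a, Gz a -> a <= u -> v < d - a.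
Proof.
move=> nI a ga au; rewrite ltnNge; apply/negP => av.
by move/negP: nI; apply; apply: (inI_intro _ _ _ ga au av).
Qed.

Lemma hole u v : ~~ inI p d c u v -> u + v <= d + (p ^ T - D T) - 2.
Proof.
move=> nI.
have ud : u < d.
  rewrite ltnNge; apply/negP => du; have := notinI _ _ nI _ Gzd du; by rewrite subnn.
have exx : exists a, gen p d c a && (a <= u) by exists 0; rewrite leq0n andbT; apply/gen_Gz/Gz0.
have bnd : forall a, gen p d c a && (a <= u) -> a <= u by move=> a /andP[].
case: (ex_maxnP exx bnd) => x /andP[/gen_Gz gx xu] xmax.
have xd : x < d := leq_ltn_trans xu ud.
have [y [gy xy yx]] := gap _ gx xd.
have uy : u < y.
  rewrite ltnNge; apply/negP => yu.
  have := xmax y; rewrite yu andbT => /(_ (proj2 (gen_Gz y) gy)). by rewrite leqNgt xy.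
exact: ar_hole uy (notinI _ _ nI _ gx xu) yx xy xd.
Qed.

Lemma pT_d : p ^ T <= d.
Proof. exact: leq_trans (leq_pexp2l p0 T_M) pM. Qed.

Lemma Gz_pT : Gz (p ^ T).
Proof.
split; first exact: pT_d.
move=> s sin; have sT := ts_leT _ sin.
by have /eqP -> : p ^ T %% p ^ s == 0 by apply: dvdn_exp2l.
Qed.

Lemma Gz_DT : Gz (D T).
Proof.
split; first exact: leq_mod.
by move=> s sin; rewrite modn_dvdm // dvdn_exp2l // ts_leT.
Qed.

Lemma top_hole : ~~ inI p d c (p ^ T - 1) (d - D T - 1).
Proof.
apply/hasP => -[a _ /and3P[/gen_Gz [ad ha] a1 a2]].
have hT := ha T (tt_in ellv (leqnn ellv)).
have hD := DT_lt T.
have hpd := pT_d.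
rewrite modn_small in hT; last by move: a1 hD; clear; lia.
move: hT a2 hD hpd ad a1; clear; lia.
Qed.

Lemma inI_x : inI p d c (p ^ T) (d - D T - 1).
Proof.
apply: (inI_intro _ _ _ Gz_pT) => //; have := DT_lt T; have := pT_d; clear; lia.
Qed.

Lemma inI_y : inI p d c (p ^ T - 1) (d - D T).
Proof.
apply: (inI_intro _ _ _ Gz_DT) => //; have := DT_lt T; clear; lia.
Qed.

Lemma nS_hole a b da db : nS p d c a b da db <> 0 ->
  [/\ da <= a, db <= b & (a - da) + (b - db) <= d + (p ^ T - D T) - 2].
Proof.
rewrite /nS; case: (boolP [&& da <= a, db <= b & ~~ inI p d c (a - da) (b - db)]) => //.
by case/and3P => h1 h2 h3 _; split => //; apply: hole.
Qed.

Lemma main_sec (k : fieldType) :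
  reg_is k p d c (d%:Z%R + phi p d c - 2)%R /\
  topdeg_is p d c (d%:Z%R + phi p d c - 2)%R.
Proof.
have hD := DT_lt T. have hpd := pT_d.
set g := p ^ T - D T.
set R := d + g - 2.
have hR : (d%:Z%R + phi p d c - 2)%R = Posz R.
  rewrite phiE; rewrite /R /g; move: hD hpd d1; clear; lia.
rewrite hR; split; split.
- move=> i j; rewrite /betti => /(sum_nz _ (fun a => mbetti k p d c a (j - a) i)) [a aj].
  case: i => [|[|[|i]]] //=.
  + move=> h; have /(nS_hole _ _ _ _)[_ _ hh] : kd0 p d c a (j - a) <> 0 by move: h; clear; lia.
    move: hh aj; clear; lia.
  + move=> h; have : kd1x p d c a (j - a) + kd1y p d c a (j - a) <> 0 by move: h; clear; lia.
    case: (posnP (kd1x p d c a (j - a))) => [-> /= h1|h1 _].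
    * rewrite add0n in h1; have [h2 h3 hh] := nS_hole _ _ _ _ h1. move: hh aj h2 h3; clear; lia.
    * have /(nS_hole _ _ _ _)[h2 h3 hh] : kd1x p d c a (j - a) <> 0 by move: h1; clear; lia.
      move: hh aj h2 h3; clear; lia.
  + move=> h; have /(nS_hole _ _ _ _)[h2 h3 hh] : kd2 p d c a (j - a) <> 0 by move: h; clear; lia.
    move: hh aj h2 h3; clear; lia.
- exists 2, (R + 2); split; last by rewrite /R; clear; lia.
  have aj : p ^ T < (R + 2).+1 by move: hD hpd; rewrite /R /g; clear; lia.
  have hb : R + 2 - p ^ T = d - D T by move: hD hpd; rewrite /R /g; clear; lia.
  have := sum_ge _ (fun a => mbetti k p d c a (R + 2 - a) 2) _ aj.
  rewrite /= hb /mbetti.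
  have e2 : kd2 p d c (p ^ T) (d - D T) = 1.
    rewrite /kd2 /nS.
    have h1 : 1 <= p ^ T by rewrite expn_gt0 p0.
    have h2 : 1 <= d - D T by rewrite subn_gt0; exact: leq_trans hD hpd.
    by rewrite h1 h2 top_hole.
  have e1 : kd1x p d c (p ^ T) (d - D T) = 0.
    by rewrite /kd1x /nS subn0 inI_y andbF.
  have e3 : kd1y p d c (p ^ T) (d - D T) = 0.
    by rewrite /kd1y /nS subn0 inI_x !andbF.
  have hr := rank_leq_col (kdiff2 k p d c (p ^ T) (d - D T)).
  have hr0 : \rank (kdiff2 k p d c (p ^ T) (d - D T)) = 0.
    apply/eqP; rewrite -leqn0; apply: leq_trans hr _; by rewrite e1 e3.
  rewrite hr0 e2 => h; apply/eqP; rewrite -lt0n; apply: leq_trans h.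
  by [].
- move=> e; rewrite /hilb => /(sum_nz _ (fun a => nS p d c a (e - a) 0 0)) [a ae].
  move=> /(nS_hole _ _ _ _)[_ _ hh]; rewrite !subn0 in hh.
  rewrite lez_nat; move: hh ae; rewrite -/g -/R; clear; lia.
- exists R; split => //.
  have aj : p ^ T - 1 < R.+1 by move: hD hpd; rewrite /R /g; clear; lia.
  have hb : R - (p ^ T - 1) = d - D T - 1 by move: hD hpd; rewrite /R /g; clear; lia.
  apply/eqP; rewrite -lt0n /hilb.
  apply: leq_trans (sum_ge _ (fun a => nS p d c a (R - a) 0 0) _ aj).
  by rewrite /= hb /nS !subn0 top_hole.
Qed.
End Main.

Theorem mainTheorem18 (k : closedFieldType) (p : nat) (hp : prime p)
    (hk : p \in [pchar k]%R) (d : nat) (hd : 1 <= d) (c : nat -> nat)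
    (hc : inC p d c) :
  reg_is k p d c (d%:Z%R + phi p d c - 2)%R /\
  topdeg_is p d c (d%:Z%R + phi p d c - 2)%R.
Proof.
have p1 : 1 < p := prime_gt1 hp.
exact: (main_sec p d c p1 hd k).
Qed.
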